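(* Let $q>1$, let $\Omega\subset\mathbb R^N$ be a domain, and let $u\in C^{2,1}(\Omega\times(0,\infty))$ be a large initial solution of $\partial_tu-\Delta u+u^q=0$ in $\Omega\times(0,\infty)$. Then for every bounded open set $G$ with $\overline G\subset\Omega$, $$\lim_{t\to0}t^{1/(q-1)}u(x,t)=c_q:=\Big(\frac1{q-1}\Big)^{1/(q-1)}\quad\text{uniformly in }x\in G.$$
   Context: A large initial solution is a positive function $u\in C^{2,1}(\Omega\times(0,\infty))$ solving $\partial_tu-\Delta u+u^q=0$ in $\Omega\times(0,\infty)$ such that $\lim_{t\to0}u(x,t)=\infty$ uniformly on every compact subset of $\Omega$. *)

(* Defs.v *)
From Stdlib Require Import Reals List.
From mathcomp Require Import ssreflect ssrbool eqtype ssrnat fintype.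
Open Scope R_scope.

Definition point (N : nat) := 'I_N -> R.

Definition sqdist {N : nat} (x y : point N) : R :=
  fold_right Rplus 0 (map (fun i => (x i - y i)^2) (enum 'I_N)).
Definition dist {N : nat} (x y : point N) : R := sqrt (sqdist x y).

Definition is_open {N} (S : point N -> Prop) : Prop :=
  forall x, S x -> exists r, r > 0 /\ forall y, dist x y < r -> S y.
Definition is_connected {N} (S : point N -> Prop) : Prop :=
  forall U V : point N -> Prop, is_open U -> is_open V ->
    (forall x, S x -> U x \/ V x) ->
    (forall x, S x -> U x -> V x -> False) ->
    (forall x, S x -> ~ U x) \/ (forall x, S x -> ~ V x).
Definition is_domain {N} (S : point N -> Prop) : Prop :=
  (exists x, S x) /\ is_open S /\ is_connected S.
Definition is_bounded {N} (S : point N -> Prop) : Prop :=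
  exists x0 M, forall x, S x -> dist x0 x <= M.
Definition closure {N} (S : point N -> Prop) : point N -> Prop :=
  fun x => forall eps, eps > 0 -> exists y, S y /\ dist x y < eps.
Definition is_closed {N} (S : point N -> Prop) : Prop :=
  forall x, closure S x -> S x.
(* compact subsets of R^N (Heine-Borel) *)
Definition is_compact {N} (K : point N -> Prop) : Prop :=
  is_closed K /\ is_bounded K.

Definition upd {N} (x : point N) (i : 'I_N) (s : R) : point N :=
  fun j => if j == i then s else x j.

Definition cont_on {N} (Omega : point N -> Prop) (f : point N -> R -> R) : Prop :=
  forall x t, Omega x -> 0 < t ->
  forall eps, eps > 0 -> exists delta, delta > 0 /\
    forall y s, Omega y -> 0 < s -> dist x y < delta -> Rabs (s - t) < delta ->
      Rabs (f y s - f x t) < eps.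

Definition C21_with {N} (Omega : point N -> Prop) (u : point N -> R -> R)
  (Du : 'I_N -> point N -> R -> R) (D2u : 'I_N -> 'I_N -> point N -> R -> R)
  (Dtu : point N -> R -> R) : Prop :=
  (forall x t, Omega x -> 0 < t ->
     (forall i, derivable_pt_lim (fun s => u (upd x i s) t) (x i) (Du i x t)) /\
     (forall i j, derivable_pt_lim (fun s => Du i (upd x j s) t) (x j) (D2u i j x t)) /\
     derivable_pt_lim (fun s => u x s) t (Dtu x t)) /\
  cont_on Omega u /\ (forall i, cont_on Omega (Du i)) /\
  (forall i j, cont_on Omega (D2u i j)) /\ cont_on Omega Dtu.

Definition laplacian_of {N} (D2u : 'I_N -> 'I_N -> point N -> R -> R)
  (x : point N) (t : R) : R :=
  fold_right Rplus 0 (map (fun i => D2u i i x t) (enum 'I_N)).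

Definition pos_solution {N} (q : R) (Omega : point N -> Prop) (u : point N -> R -> R) : Prop :=
  (forall x t, Omega x -> 0 < t -> 0 < u x t) /\
  exists Du D2u Dtu, C21_with Omega u Du D2u Dtu /\
    forall x t, Omega x -> 0 < t ->
      Dtu x t - laplacian_of D2u x t + Rpower (u x t) q = 0.

Definition large_initial_solution {N} (q : R) (Omega : point N -> Prop)
  (u : point N -> R -> R) : Prop :=
  pos_solution q Omega u /\
  forall K : point N -> Prop, is_compact K -> (forall x, K x -> Omega x) ->
    forall M, exists delta, delta > 0 /\
      forall x t, K x -> 0 < t < delta -> M < u x t.

Definition c_q (q : R) : R := Rpower (1 / (q - 1)) (1 / (q - 1)).

(* Main.v *)
From Pilot Require Import Defs.
From Stdlib Require Import Reals Lra Lia Psatz List FunctionalExtensionality Classical ClassicalEpsilon.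
From mathcomp Require Import ssreflect ssrbool eqtype ssrnat seq fintype.
Open Scope R_scope.
Notation dist := Pilot.Defs.dist.

Section Sums.
Variable T : eqType.
Implicit Types (l : list T) (f g : T -> R) (i : T).
Definition fs (l : list T) (f : T -> R) := fold_right Rplus 0 (map f l).

Lemma fs_nil f : fs nil f = 0. Proof. reflexivity. Qed.
Lemma fs_cons a l f : fs (a :: l) f = f a + fs l f. Proof. reflexivity. Qed.

Lemma fs_nonneg l f : (forall i, 0 <= f i) -> 0 <= fs l f.
Proof. intros H; induction l as [|a l IH]; rewrite ?fs_nil ?fs_cons; [lra| specialize (H a); lra]. Qed.

Lemma fs_le l f g : (forall i, f i <= g i) -> fs l f <= fs l g.
Proof. intros H; induction l as [|a l IH]; rewrite ?fs_nil ?fs_cons; [lra| specialize (H a); lra]. Qed.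

Lemma fs_ext l f g : (forall i, f i = g i) -> fs l f = fs l g.
Proof. intros H; induction l as [|a l IH]; rewrite ?fs_nil ?fs_cons; [lra| rewrite H IH; lra]. Qed.

Lemma fs_plus l f g : fs l (fun i => f i + g i) = fs l f + fs l g.
Proof. induction l as [|a l IH]; rewrite ?fs_nil ?fs_cons; [lra| rewrite IH; lra]. Qed.

Lemma fs_scal l c f : fs l (fun i => c * f i) = c * fs l f.
Proof. induction l as [|a l IH]; rewrite ?fs_nil ?fs_cons; [lra| rewrite IH; lra]. Qed.

Lemma fs_const l c : fs l (fun _ => c) = INR (length l) * c.
Proof. induction l as [|a l IH]; rewrite ?fs_nil ?fs_cons; simpl length; [simpl; lra| rewrite IH S_INR; lra]. Qed.

Lemma fs_term l f i : (forall j, 0 <= f j) -> i \in l -> f i <= fs l f.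
Proof.
  intros H; induction l as [|a l IH]; first by [].
  rewrite in_cons => /orP [/eqP -> | Hi]; rewrite fs_cons.
  - have ? := fs_nonneg l f H; lra.
  - have ? := IH Hi; have ? := H a; lra.
Qed.

Lemma fs_CS l f g : (fs l (fun i => f i * g i))^2 <= fs l (fun i => f i ^ 2) * fs l (fun i => g i ^ 2).
Proof.
  induction l as [|a l IH]; rewrite ?fs_nil ?fs_cons; first (simpl; lra).
  set X := fs l _ in IH |- *; set A := fs l (fun i => f i ^ 2) in IH |- *;
  set B := fs l (fun i => g i ^ 2) in IH |- *.
  have HA : 0 <= A by apply fs_nonneg => i; nra.
  have HB : 0 <= B by apply fs_nonneg => i; nra.
  set p := sqrt A. set r := sqrt B.
  have Hp : p * p = A by apply sqrt_sqrt.
  have Hr : r * r = B by apply sqrt_sqrt.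
  have Hp0 : 0 <= p by apply sqrt_pos.
  have Hr0 : 0 <= r by apply sqrt_pos.
  have HX : Rabs X <= p * r.
  { have E : Rabs X ^ 2 = X ^ 2 by apply pow2_abs.
    have ? := Rabs_pos X.
    destruct (Rle_lt_dec (Rabs X) (p*r)) as [h|h]; auto. exfalso.
    have h2 : 0 <= p * r by nra.
    have h3 : (p*r) * (p*r) < Rabs X * Rabs X by nra. nra. }
  have H2 : 2 * X * (f a * g a) <= A * g a ^ 2 + B * f a ^ 2.
  { have : 2 * X * (f a * g a) <= 2 * (p * r) * Rabs (f a * g a).
    { have ? := Rabs_triang_inv 0 0. 
      have H3 : X * (f a * g a) <= Rabs X * Rabs (f a * g a).
      { rewrite -Rabs_mult; apply Rle_abs. }
      have ? := Rabs_pos (f a * g a). nra. }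
    rewrite Rabs_mult.
    have ? := Rabs_pos (f a); have ? := Rabs_pos (g a).
    have E1 : f a ^ 2 = Rabs (f a) ^ 2 by rewrite pow2_abs.
    have E2 : g a ^ 2 = Rabs (g a) ^ 2 by rewrite pow2_abs.
    rewrite E1 E2 -Hp -Hr.
    have ? := pow2_ge_0 (p * Rabs (g a) - r * Rabs (f a)). nra. }
  nra.
Qed.


Lemma fs_notin l f f' i : i \notin l -> (forall j, j != i -> f' j = f j) -> fs l f' = fs l f.
Proof.
  intros Hi Hf; induction l as [|a l IH]; first by [].
  move: Hi; rewrite in_cons negb_or => /andP [Ha Hi].
  rewrite !fs_cons Hf; last by rewrite eq_sym. by rewrite IH.
Qed.

Lemma fs_upd l f f' i : uniq l -> i \in l -> (forall j, j != i -> f' j = f j) ->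
  fs l f' = fs l f - f i + f' i.
Proof.
  intros Hu Hi Hf. induction l as [|a l IH]; first by [].
  move: Hu => /= /andP [Ha Hu]. rewrite !fs_cons.
  move: Hi; rewrite in_cons => /orP [/eqP E | Hi].
  - subst a. rewrite (fs_notin l f f' i) //; lra.
  - rewrite IH //. rewrite Hf; first lra. apply/negP => /eqP E; subst a. by rewrite Hi in Ha.
Qed.
End Sums.
Arguments fs {T} l f.

Section Dist.
Variable N : nat.
Implicit Types x y z : point N.

Lemma sqdist_fs x y : sqdist x y = fs (enum 'I_N) (fun i => (x i - y i)^2).
Proof. reflexivity. Qed.

Lemma sqdist_nonneg x y : 0 <= sqdist x y.
Proof. rewrite sqdist_fs; apply fs_nonneg => i; apply pow2_ge_0. Qed.

Lemma dist_nonneg x y : 0 <= dist x y.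
Proof. apply sqrt_pos. Qed.

Lemma dist_sq x y : dist x y ^ 2 = sqdist x y.
Proof. rewrite /dist /= Rmult_1_r sqrt_sqrt //; apply sqdist_nonneg. Qed.

Lemma sqdist_sym x y : sqdist x y = sqdist y x.
Proof. rewrite !sqdist_fs; apply fs_ext => i; ring. Qed.

Lemma dist_sym x y : dist x y = dist y x.
Proof. by rewrite /dist sqdist_sym. Qed.

Lemma dist_refl x : dist x x = 0.
Proof. rewrite /dist sqdist_fs (fs_ext _ _ _ (fun _ => 0)); last by move=> i; ring.
  rewrite fs_const Rmult_0_r; apply sqrt_0. Qed.

Lemma mem_enum_ord (i : 'I_N) : i \in enum 'I_N.
Proof. by rewrite mem_enum. Qed.

Lemma coord_sq x y i : (x i - y i)^2 <= sqdist x y.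
Proof. rewrite sqdist_fs. apply (fs_term _ _ (fun i => (x i - y i)^2)). move=> j; apply pow2_ge_0. apply mem_enum_ord. Qed.

Lemma coord_le x y i : Rabs (x i - y i) <= dist x y.
Proof.
  rewrite /dist. rewrite -sqrt_Rsqr_abs. apply sqrt_le_1_alt.
  rewrite /Rsqr. have := coord_sq x y i. simpl. lra.
Qed.

Lemma upd_same x i s : upd x i s i = s.
Proof. by rewrite /upd eqxx. Qed.

Lemma upd_other x i j s : j != i -> upd x i s j = x j.
Proof. by rewrite /upd => /negbTE ->. Qed.

Lemma upd_upd x i s s' : upd (upd x i s) i s' = upd x i s'.
Proof. apply functional_extensionality => j. rewrite /upd. by case: (j == i). Qed.

Lemma upd_id x i : upd x i (x i) = x.
Proof. apply functional_extensionality => j. rewrite /upd. by case: (boolP (j == i)) => [/eqP ->|]. Qed.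

Lemma sqdist_upd x y i s : sqdist (upd x i s) y = sqdist x y - (x i - y i)^2 + (s - y i)^2.
Proof.
  rewrite !sqdist_fs. rewrite (fs_upd _ _ (fun j => (x j - y j)^2) _ i).
  - by rewrite upd_same.
  - apply enum_uniq.
  - apply mem_enum_ord.
  - move=> j Hj; by rewrite upd_other.
Qed.

Lemma dist_upd x i s : dist x (upd x i s) = Rabs (s - x i).
Proof.
  rewrite /dist sqdist_sym sqdist_upd.
  have E : sqdist x x = 0. { have := dist_sq x x. rewrite dist_refl. simpl. lra. }
  rewrite E. replace (x i - x i) with 0 by ring.
  rewrite -sqrt_Rsqr_abs /Rsqr. f_equal. simpl. ring.
Qed.

Lemma dist_triang x y z : dist x z <= dist x y + dist y z.
Proof.
  have H1 : sqdist x z = sqdist x y + 2 * fs (enum 'I_N) (fun i => (x i - y i) * (y i - z i)) + sqdist y z.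
  { rewrite !sqdist_fs -fs_scal -!fs_plus. apply fs_ext => i. ring. }
  have HCS := fs_CS _ (enum 'I_N) (fun i => x i - y i) (fun i => y i - z i).
  rewrite -!sqdist_fs -!dist_sq in HCS.
  set S := fs _ _ in H1 HCS.
  have ? := dist_nonneg x y. have ? := dist_nonneg y z.
  have HS : S <= dist x y * dist y z.
  { destruct (Rle_lt_dec S (dist x y * dist y z)) as [h|h]; auto. exfalso.
    have h2 : 0 <= dist x y * dist y z by nra.
    have h3 : (dist x y * dist y z) * (dist x y * dist y z) < S * S by nra. nra. }
  rewrite -!dist_sq in H1.
  have ? := dist_nonneg x z.
  destruct (Rle_lt_dec (dist x z) (dist x y + dist y z)) as [h|h]; auto. exfalso.
  have h3 : (dist x y + dist y z) * (dist x y + dist y z) < dist x z * dist x z by nra. nra.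
Qed.

End Dist.

Definition strict (phi : nat -> nat) := forall n, (phi n < phi (S n))%coq_nat.

Lemma strict_ge phi : strict phi -> forall n, (n <= phi n)%coq_nat.
Proof. intros H n; induction n as [|n IH]; [lia| have := H n; lia]. Qed.

Lemma strict_mono phi : strict phi -> forall n m, (n <= m)%coq_nat -> (phi n <= phi m)%coq_nat.
Proof. intros H n m Hnm; induction Hnm as [|m Hm IH]; [lia| have := H m; lia]. Qed.

Lemma strict_comp phi psi : strict phi -> strict psi -> strict (fun n => phi (psi n)).
Proof. intros H1 H2 n. have := H2 n => h. have := strict_mono phi H1 (S (psi n)) (psi (S n)) h. have := H1 (psi n). lia. Qed.

Lemma cv_sub u l phi : Un_cv u l -> strict phi -> Un_cv (fun n => u (phi n)) l.
Proof.
  intros Hu Hp eps He. destruct (Hu eps He) as [n0 Hn0]. exists n0 => n Hn.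
  apply Hn0. have := strict_ge phi Hp n. unfold ge in *. lia.
Qed.

Lemma small_inv eps : 0 < eps -> exists n0, forall n, (n0 <= n)%coq_nat -> / (INR n + 1) < eps.
Proof.
  intros He. destruct (archimed_cor1 eps He) as [n0 [H1 H2]]. exists n0 => n Hn.
  have h1 : 0 < INR n0 by apply lt_0_INR.
  have h2 : INR n0 <= INR n by apply le_INR.
  apply Rle_lt_trans with (/ INR n0); auto. apply Rinv_le_contravar; lra.
Qed.

Fixpoint extract (F : nat -> nat -> nat) (n : nat) : nat :=
  match n with O => F O O | S m => F (S m) (S (extract F m)) end.

Lemma abs_bounds x M : Rabs x <= M -> -M <= x <= M.
Proof. unfold Rabs; destruct (Rcase_abs x); lra. Qed.

Lemma BW1 (a : nat -> R) M : (forall n, Rabs (a n) <= M) ->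
  exists phi l, strict phi /\ Un_cv (fun n => a (phi n)) l.
Proof.
  intros Ha.
  destruct (Bolzano_Weierstrass a (fun c => -M <= c <= M) (compact_P3 _ _)) as [l Hl].
  { intros n; apply abs_bounds, Ha. }
  have H : forall k n, exists p, (n <= p)%coq_nat /\ Rabs (a p - l) < / (INR k + 1).
  { intros k n.
    have hp : 0 < / (INR k + 1) by apply Rinv_0_lt_compat; have := pos_INR k; lra.
    pose d := mkposreal _ hp.
    destruct (Hl (disc l d) n) as [p [Hp Hd]].
    - by exists d.
    - exists p; split; [exact Hp| exact Hd]. }
  pose F k n := proj1_sig (constructive_indefinite_description _ (H k n)).
  have HF : forall k n, (n <= F k n)%coq_nat /\ Rabs (a (F k n) - l) < / (INR k + 1).
  { intros k n. exact (proj2_sig (constructive_indefinite_description _ (H k n))). }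
  exists (extract F), l. split.
  - intros n. simpl. have := proj1 (HF (S n) (S (extract F n))). lia.
  - intros eps He. destruct (small_inv eps He) as [n0 Hn0]. exists n0 => n Hn.
    unfold R_dist.
    have E : Rabs (a (extract F n) - l) < / (INR n + 1).
    { destruct n; simpl; apply HF. }
    eapply Rlt_trans; [exact E| apply Hn0; unfold ge in Hn; lia].
Qed.

Lemma BWlist (L : list (nat -> R)) : (forall f, In f L -> exists M, forall n, Rabs (f n) <= M) ->
  exists phi, strict phi /\ forall f, In f L -> exists l, Un_cv (fun n => f (phi n)) l.
Proof.
  induction L as [|f L IH]; intros HL.
  - exists (fun n => n); split; [intros n; lia| intros f []].
  - destruct IH as [phi [Hphi Hc]]. { intros g Hg; apply HL; right; exact Hg. }
    destruct (HL f (or_introl (Logic.eq_refl f))) as [M HM].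
    destruct (BW1 (fun n => f (phi n)) M) as [psi [l [Hpsi Hl]]]. { intros n; apply HM. }
    exists (fun n => phi (psi n)); split. { apply strict_comp; auto. }
    intros g [<-|Hg].
    + exists l; exact Hl.
    + destruct (Hc g Hg) as [l' Hl']. exists l'. apply (cv_sub (fun n => g (phi n))); auto.
Qed.

Lemma mem_In (T : eqType) (l : list T) (i : T) : i \in l -> In i l.
Proof. induction l as [|a l IH]; first by []. rewrite in_cons => /orP [/eqP ->|H]; [by left|right; auto]. Qed.

Definition cvp {N} (xs : nat -> point N) (x : point N) :=
  forall eps, eps > 0 -> exists n0, forall n, (n0 <= n)%coq_nat -> dist (xs n) x < eps.

Lemma cv_sq (u : nat -> R) l : Un_cv u l -> Un_cv (fun n => (u n - l)^2) 0.
Proof.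
  intros H eps He. destruct (H (Rmin 1 eps)) as [n0 Hn0]. { apply Rmin_pos; lra. }
  exists n0 => n Hn. have h := Hn0 n Hn. unfold R_dist in *. rewrite Rminus_0_r.
  have h1 := Rmin_l 1 eps. have h2 := Rmin_r 1 eps.
  rewrite Rabs_pos_eq; [|apply pow2_ge_0].
  rewrite -pow2_abs. have := Rabs_pos (u n - l). simpl. nra.
Qed.

Lemma fs_cv0 (T : eqType) (l : list T) (g : T -> nat -> R) :
  (forall i, Un_cv (g i) 0) -> Un_cv (fun n => fs l (fun i => g i n)) 0.
Proof.
  intros H. induction l as [|a l IH].
  - intros eps He. exists O => n _. unfold R_dist. rewrite fs_nil Rminus_0_r Rabs_R0. lra.
  - have := CV_plus _ _ _ _ (H a) IH. rewrite Rplus_0_r. intros h. exact h.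
Qed.

Lemma cvp_coord N (xs : nat -> point N) x : (forall i, Un_cv (fun n => xs n i) (x i)) -> cvp xs x.
Proof.
  intros H.
  have Hs : Un_cv (fun n => sqdist (xs n) x) 0.
  { apply (fs_cv0 _ (enum 'I_N) (fun i n => (xs n i - x i)^2)). intros i; apply cv_sq, H. }
  intros eps He. destruct (Hs (eps^2)) as [n0 Hn0]. { simpl; nra. }
  exists n0 => n Hn. have h := Hn0 n Hn. unfold R_dist in h. rewrite Rminus_0_r Rabs_pos_eq in h; [|apply sqdist_nonneg].
  rewrite /dist. rewrite -(sqrt_pow2 eps); [|lra]. apply sqrt_lt_1_alt. split; [apply sqdist_nonneg| exact h].
Qed.

Lemma seq_compact N (x0 : point N) M a b (xs : nat -> point N) (ss : nat -> R) :
  (forall n, dist x0 (xs n) <= M) -> (forall n, a <= ss n <= b) ->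
  exists phi x s, strict phi /\ cvp (fun n => xs (phi n)) x /\ Un_cv (fun n => ss (phi n)) s.
Proof.
  intros Hx Hs.
  destruct (BWlist (ss :: map (fun i n => xs n i) (enum 'I_N))) as [phi [Hphi Hc]].
  { intros f [<-|Hf].
    - exists (Rabs a + Rabs b) => n. have := Hs n. unfold Rabs; repeat destruct Rcase_abs; lra.
    - apply in_map_iff in Hf. destruct Hf as [i [<- _]].
      exists (Rabs (x0 i) + M) => n. have h := coord_le _ (xs n) x0 i. rewrite dist_sym in h. have h2 := Hx n.
      have h3 := Rabs_triang (xs n i - x0 i) (x0 i). replace (xs n i - x0 i + x0 i) with (xs n i) in h3 by ring. lra. }
  have Hi : forall i : 'I_N, exists l, Un_cv (fun n => xs (phi n) i) l.
  { intros i. apply (Hc (fun n => xs n i)). right. apply in_map_iff. exists i; split; auto. apply mem_In, mem_enum_ord. }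
  pose x := fun i => proj1_sig (constructive_indefinite_description _ (Hi i)).
  destruct (Hc ss (or_introl (Logic.eq_refl ss))) as [s Hs'].
  exists phi, x, s. split; [exact Hphi|split; [|exact Hs']].
  apply cvp_coord => i. exact (proj2_sig (constructive_indefinite_description _ (Hi i))).
Qed.

Definition contC {N} (C : point N -> R -> Prop) (w : point N -> R -> R) :=
  forall x s, C x s -> forall eps, eps > 0 -> exists delta, delta > 0 /\
    forall y r, C y r -> dist x y < delta -> Rabs (r - s) < delta -> Rabs (w y r - w x s) < eps.

Definition closedC {N} (C : point N -> R -> Prop) :=
  forall xs ss x s, (forall n, C (xs n) (ss n)) -> cvp xs x -> Un_cv ss s -> C x s.

Definition boundedC {N} (C : point N -> R -> Prop) :=
  exists x0 M a b, forall x s, C x s -> dist x0 x <= M /\ a <= s <= b.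

Lemma seq_choice N (P : nat -> point N -> R -> Prop) : (forall n, exists x s, P n x s) ->
  exists xs ss, forall n, P n (xs n) (ss n).
Proof.
  intros H. have H' : forall n, exists p : point N * R, P n (fst p) (snd p).
  { intros n; destruct (H n) as [x [s h]]; exists (x, s); exact h. }
  exists (fun n => fst (proj1_sig (constructive_indefinite_description _ (H' n)))).
  exists (fun n => snd (proj1_sig (constructive_indefinite_description _ (H' n)))).
  intros n; exact (proj2_sig (constructive_indefinite_description _ (H' n))).
Qed.

Lemma C_extract N (C : point N -> R -> Prop) (xs : nat -> point N) (ss : nat -> R) :
  boundedC C -> closedC C -> (forall n, C (xs n) (ss n)) ->
  exists phi x s, strict phi /\ C x s /\ cvp (fun n => xs (phi n)) x /\ Un_cv (fun n => ss (phi n)) s.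
Proof.
  intros [x0 [M [a [b HB]]]] Hcl Hn.
  destruct (seq_compact N x0 M a b xs ss) as [phi [x [s [H1 [H2 H3]]]]].
  - intros n; apply (HB _ _ (Hn n)).
  - intros n; apply (HB _ _ (Hn n)).
  - exists phi, x, s; repeat split; auto. apply (Hcl (fun n => xs (phi n)) (fun n => ss (phi n))); auto.
Qed.

Lemma cv_near N (w : point N -> R -> R) C (xs : nat -> point N) (ss : nat -> R) x s phi eps :
  contC C w -> C x s -> (forall n, C (xs n) (ss n)) -> cvp (fun n => xs (phi n)) x ->
  Un_cv (fun n => ss (phi n)) s -> eps > 0 ->
  exists n0, forall n, (n0 <= n)%coq_nat -> Rabs (w (xs (phi n)) (ss (phi n)) - w x s) < eps.
Proof.
  intros Hw Hc Hn Hx Hs He.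
  destruct (Hw x s Hc eps He) as [d [Hd Hd']].
  destruct (Hx d Hd) as [n1 Hn1]. destruct (Hs d Hd) as [n2 Hn2].
  exists (max n1 n2) => n Hnn. apply Hd'; auto.
  - rewrite dist_sym; apply Hn1; lia.
  - apply Hn2; unfold ge; lia.
Qed.

Lemma EVT N (C : point N -> R -> Prop) (w : point N -> R -> R) :
  boundedC C -> closedC C -> (exists x s, C x s) -> contC C w ->
  exists xm sm, C xm sm /\ forall x s, C x s -> w x s <= w xm sm.
Proof.
  intros HB Hcl Hne Hw.
  have Hbd : exists K, forall x s, C x s -> w x s <= K.
  { apply NNPP => Hno.
    have H : forall n : nat, exists x s, C x s /\ INR n < w x s.
    { intros n. apply NNPP => h. apply Hno. exists (INR n) => x s Hc.
      apply Rnot_lt_le => h2. apply h. exists x, s; auto. }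
    destruct (seq_choice N (fun n x s => C x s /\ INR n < w x s) H) as [xs [ss Hxs]].
    destruct (C_extract N C xs ss HB Hcl (fun n => proj1 (Hxs n))) as [phi [x [s [Hphi [Hc [Hx Hs]]]]]].
    destruct (cv_near N w C xs ss x s phi 1 Hw Hc (fun n => proj1 (Hxs n)) Hx Hs) as [n0 Hn0]; [lra|].
    destruct (INR_unbounded (w x s + 1)) as [n1 Hn1].
    pose n := max n0 n1.
    have h1 := Hn0 n (Nat.le_max_l _ _).
    have h2 := proj2 (Hxs (phi n)).
    have h3 : INR n1 <= INR (phi n).
    { apply le_INR. have := strict_ge phi Hphi n. have := Nat.le_max_r n0 n1. lia. }
    unfold Rabs in h1; destruct Rcase_abs in h1; lra. }
  destruct Hbd as [K HK].
  pose E := fun v => exists x s, C x s /\ v = w x s.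
  destruct (completeness E) as [m [Hm1 Hm2]].
  { exists K => v [x [s [Hc ->]]]; auto. }
  { destruct Hne as [x [s Hc]]. exists (w x s), x, s; auto. }
  have H : forall n : nat, exists x s, C x s /\ m - / (INR n + 1) < w x s.
  { intros n. apply NNPP => h.
    have : m <= m - / (INR n + 1).
    { apply Hm2 => v [x [s [Hc ->]]]. apply Rnot_lt_le => h2. apply h; exists x, s; auto. }
    have : 0 < / (INR n + 1) by apply Rinv_0_lt_compat; have := pos_INR n; lra.
    lra. }
  destruct (seq_choice N (fun n x s => C x s /\ m - / (INR n + 1) < w x s) H) as [xs [ss Hxs]].
  destruct (C_extract N C xs ss HB Hcl (fun n => proj1 (Hxs n))) as [phi [x [s [Hphi [Hc [Hx Hs]]]]]].
  exists x, s; split; auto.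
  have Hle : forall y r, C y r -> w y r <= m.
  { intros y r h; apply Hm1; exists y, r; auto. }
  enough (m <= w x s) by (intros y r h; have := Hle y r h; lra).
  apply Rnot_lt_le => hlt.
  pose eps := (m - w x s) / 2.
  destruct (cv_near N w C xs ss x s phi eps Hw Hc (fun n => proj1 (Hxs n)) Hx Hs) as [n0 Hn0]; [unfold eps; lra|].
  destruct (small_inv eps) as [n1 Hn1]; [unfold eps; lra|].
  pose n := max n0 n1.
  have h1 := Hn0 n (Nat.le_max_l _ _).
  have h2 := proj2 (Hxs (phi n)).
  have h3 : / (INR (phi n) + 1) < eps.
  { apply Hn1. have := strict_ge phi Hphi n. have := Nat.le_max_r n0 n1. lia. }
  unfold Rabs in h1; destruct Rcase_abs in h1; unfold eps in *; lra.
Qed.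

Lemma max_left (h : R -> R) x d delta : derivable_pt_lim h x d -> delta > 0 ->
  (forall y, x - delta < y <= x -> h y <= h x) -> 0 <= d.
Proof.
  intros Hd Hdel Hm. apply Rnot_lt_le => hd.
  destruct (Hd (- d / 2)) as [dl Hdl]; [lra|].
  have hdl := cond_pos dl.
  pose h0 := - Rmin delta dl / 2.
  have hm1 := Rmin_l delta dl. have hm2 := Rmin_r delta dl. have hm3 : 0 < Rmin delta dl by apply Rmin_pos.
  have H1 := Hdl h0 ltac:(unfold h0; lra) ltac:(unfold h0; rewrite Rabs_left; lra).
  have H2 := Hm (x + h0) ltac:(unfold h0; lra).
  have H3 : (h (x + h0) - h x) / h0 >= 0.
  { unfold Rdiv. apply Rle_ge. replace ((h (x + h0) - h x) * / h0) with ((h x - h (x + h0)) * / (- h0)).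
    - apply Rmult_le_pos; [lra| left; apply Rinv_0_lt_compat; unfold h0; lra].
    - field. unfold h0; lra. }
  unfold Rabs in H1; destruct Rcase_abs in H1; lra.
Qed.

Lemma max_right (h : R -> R) x d delta : derivable_pt_lim h x d -> delta > 0 ->
  (forall y, x <= y < x + delta -> h y <= h x) -> d <= 0.
Proof.
  intros Hd Hdel Hm. apply Rnot_lt_le => hd.
  destruct (Hd (d / 2)) as [dl Hdl]; [lra|].
  have hdl := cond_pos dl.
  pose h0 := Rmin delta dl / 2.
  have hm1 := Rmin_l delta dl. have hm2 := Rmin_r delta dl. have hm3 : 0 < Rmin delta dl by apply Rmin_pos.
  have H1 := Hdl h0 ltac:(unfold h0; lra) ltac:(unfold h0; rewrite Rabs_right; lra).
  have H2 := Hm (x + h0) ltac:(unfold h0; lra).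
  have H3 : (h (x + h0) - h x) / h0 <= 0.
  { unfold Rdiv. replace ((h (x + h0) - h x) * / h0) with (- ((h x - h (x + h0)) * / h0)) by ring.
    have : 0 <= (h x - h (x + h0)) * / h0.
    { apply Rmult_le_pos; [lra| left; apply Rinv_0_lt_compat; unfold h0; lra]. }
    lra. }
  unfold Rabs in H1; destruct Rcase_abs in H1; lra.
Qed.

Lemma max_second (k g : R -> R) x L delta : delta > 0 ->
  (forall y, Rabs (y - x) < delta -> k y <= k x) ->
  (forall y, Rabs (y - x) < delta -> derivable_pt_lim k y (g y)) ->
  derivable_pt_lim g x L -> L <= 0.
Proof.
  intros Hdel Hm Hk Hg.
  have Hx : Rabs (x - x) < delta by rewrite Rminus_diag Rabs_R0.
  have g0 : g x = 0.
  { apply Rle_antisym.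
    - apply (max_right k x (g x) delta (Hk x Hx) Hdel) => y hy. apply Hm. rewrite Rabs_right; lra.
    - apply (max_left k x (g x) delta (Hk x Hx) Hdel) => y hy. apply Hm. rewrite Rabs_left1; lra. }
  apply Rnot_lt_le => hL.
  destruct (Hg (L / 2)) as [dl Hdl]; [lra|].
  have hdl := cond_pos dl.
  pose h0 := Rmin delta dl / 2.
  have hm1 := Rmin_l delta dl. have hm2 := Rmin_r delta dl. have hm3 : 0 < Rmin delta dl by apply Rmin_pos.
  have Hpos : forall y, x < y <= x + h0 -> 0 < g y.
  { intros y hy. have H1 := Hdl (y - x) ltac:(lra) ltac:(rewrite Rabs_right; unfold h0 in *; lra).
    replace (x + (y - x)) with y in H1 by ring. rewrite g0 Rminus_0_r in H1.
    have H2 : L / 2 < g y / (y - x) by (unfold Rabs in H1; destruct Rcase_abs in H1; lra).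
    have H3 : 0 < g y / (y - x) by lra.
    have H4 : 0 < y - x by lra.
    have := Rmult_lt_0_compat _ _ H3 H4. unfold Rdiv. rewrite Rmult_assoc Rinv_l; lra. }
  destruct (MVT_cor2 k g x (x + h0)) as [c [Hc1 Hc2]].
  - unfold h0; lra.
  - intros c hc. apply Hk. unfold Rabs; destruct Rcase_abs; unfold h0 in *; lra.
  - have := Hpos c ltac:(lra). have := Hm (x + h0) ltac:(rewrite Rabs_right; unfold h0 in *; lra).
    replace (x + h0 - x) with h0 in Hc1 by ring. have : 0 < h0 by unfold h0; lra. nra.
Qed.

Definition cyl {N} (x0 : point N) r t1 t2 := fun x s => dist x0 x <= r /\ t1 <= s <= t2.

Lemma cv_le (u : nat -> R) l b : Un_cv u l -> (forall n, u n <= b) -> l <= b.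
Proof.
  intros Hu Hb. apply Rnot_lt_le => h. destruct (Hu (l - b)) as [n0 Hn0]; [lra|].
  have := Hn0 n0 (le_n _). have := Hb n0. unfold R_dist, Rabs; destruct Rcase_abs; lra.
Qed.

Lemma cv_ge (u : nat -> R) l b : Un_cv u l -> (forall n, b <= u n) -> b <= l.
Proof.
  intros Hu Hb. apply Rnot_lt_le => h. destruct (Hu (b - l)) as [n0 Hn0]; [lra|].
  have := Hn0 n0 (le_n _). have := Hb n0. unfold R_dist, Rabs; destruct Rcase_abs; lra.
Qed.

Lemma cvp_dist_le N (x0 : point N) (xs : nat -> point N) x r :
  cvp xs x -> (forall n, dist x0 (xs n) <= r) -> dist x0 x <= r.
Proof.
  intros Hx Hr. apply Rnot_lt_le => h. destruct (Hx (dist x0 x - r)) as [n0 Hn0]; [lra|].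
  have := Hn0 n0 (le_n _). have := Hr n0. have := dist_triang _ x0 (xs n0) x. lra.
Qed.

Lemma cyl_bounded N (x0 : point N) r t1 t2 : boundedC (cyl x0 r t1 t2).
Proof. exists x0, r, t1, t2 => x s h; exact h. Qed.

Lemma cyl_closed N (x0 : point N) r t1 t2 : closedC (cyl x0 r t1 t2).
Proof.
  intros xs ss x s Hn Hx Hs. split.
  - apply (cvp_dist_le N x0 xs x r Hx) => n; apply Hn.
  - split; [apply (cv_ge ss s t1 Hs) | apply (cv_le ss s t2 Hs)] => n; apply Hn.
Qed.

Definition lap {N} (L : 'I_N -> point N -> R -> R) x s := fs (enum 'I_N) (fun i => L i x s).

Definition derivs {N} (P : point N -> R -> Prop) (f : point N -> R -> R) (Df Lf : 'I_N -> point N -> R -> R) (Tf : point N -> R -> R) :=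
  forall x s, P x s ->
    (forall i, derivable_pt_lim (fun y => f (upd x i y) s) (x i) (Df i x s)) /\
    (forall i, derivable_pt_lim (fun y => Df i (upd x i y) s) (x i) (Lf i x s)) /\
    derivable_pt_lim (fun y => f x y) s (Tf x s).

Lemma max_principle N (x0 : point N) r t1 t2 (f g : point N -> R -> R) Df Lf Tf Dg Lg Tg :
  t1 <= t2 ->
  derivs (fun x s => dist x0 x < r /\ t1 < s) f Df Lf Tf ->
  derivs (fun x s => dist x0 x < r /\ t1 < s) g Dg Lg Tg ->
  contC (cyl x0 r t1 t2) (fun x s => f x s - g x s) ->
  (forall x, dist x0 x <= r -> f x t1 <= g x t1) ->
  (forall x s, dist x0 x = r -> t1 <= s <= t2 -> f x s <= g x s) ->
  (forall x s, dist x0 x < r -> t1 < s <= t2 -> g x s < f x s ->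
     Tg x s <= Tf x s -> lap Lf x s <= lap Lg x s -> False) ->
  forall x s, dist x0 x <= r -> t1 <= s <= t2 -> f x s <= g x s.
Proof.
  intros Ht Hf Hg Hc Hbot Hlat Hpde x s Hx Hs.
  have Hr : 0 <= r by have := dist_nonneg _ x0 x; lra.
  destruct (EVT N (cyl x0 r t1 t2) (fun x s => f x s - g x s) (cyl_bounded _ _ _ _ _) (cyl_closed _ _ _ _ _))
    as [xm [sm [[Hxm Hsm] Hmax]]]; auto.
  { exists x0, t1. split; [rewrite dist_refl; lra| lra]. }
  suff : f xm sm - g xm sm <= 0 by (have := Hmax x s (conj Hx Hs); lra).
  apply Rnot_lt_le => hpos.
  have Hsm1 : t1 < sm.
  { destruct (Rle_lt_or_eq_dec t1 sm (proj1 Hsm)) as [h|h]; auto. subst sm. have := Hbot xm Hxm. lra. }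
  have Hxm1 : dist x0 xm < r.
  { destruct (Rle_lt_or_eq_dec _ _ Hxm) as [h|h]; auto. have := Hlat xm sm h Hsm. lra. }
  destruct (Hf xm sm (conj Hxm1 Hsm1)) as [Hf1 [Hf2 Hf3]].
  destruct (Hg xm sm (conj Hxm1 Hsm1)) as [Hg1 [Hg2 Hg3]].
  apply (Hpde xm sm Hxm1 (conj Hsm1 (proj2 Hsm)) ltac:(lra)).
  -
    have := max_left (fun y => f xm y - g xm y) sm (Tf xm sm - Tg xm sm) (sm - t1)
      (derivable_pt_lim_minus _ _ _ _ _ Hf3 Hg3) ltac:(lra).
    intros H. have := H ltac:(intros y hy; apply Hmax; split; [exact Hxm| lra]). lra.
  -
    rewrite /lap. apply fs_le => i.
    pose rho := r - dist x0 xm.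
    have Hin : forall y, Rabs (y - xm i) < rho -> dist x0 (upd xm i y) < r.
    { intros y hy. have := dist_triang _ x0 xm (upd xm i y). rewrite dist_upd. unfold rho in hy. lra. }
    have Hd : forall y, Rabs (y - xm i) < rho ->
       derivable_pt_lim (fun y => f (upd xm i y) sm - g (upd xm i y) sm) y
         ((fun y => Df i (upd xm i y) sm - Dg i (upd xm i y) sm) y).
    { intros y hy. destruct (Hf _ _ (conj (Hin y hy) Hsm1)) as [h1 _].
      destruct (Hg _ _ (conj (Hin y hy) Hsm1)) as [h2 _].
      have := derivable_pt_lim_minus _ _ _ _ _ (h1 i) (h2 i).
      rewrite upd_same.
      have E : (fun y0 => f (upd (upd xm i y) i y0) sm - g (upd (upd xm i y) i y0) sm) =
               (fun y0 => f (upd xm i y0) sm - g (upd xm i y0) sm).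
      { apply functional_extensionality => y0; by rewrite upd_upd. }
      have E2 : minus_fct (fun x => f (upd (upd xm i y) i x) sm) (fun x => g (upd (upd xm i y) i x) sm) =
               (fun y0 => f (upd xm i y0) sm - g (upd xm i y0) sm).
      { rewrite /minus_fct. apply functional_extensionality => y0; by rewrite upd_upd. }
      by rewrite E2. }
    have := max_second (fun y => f (upd xm i y) sm - g (upd xm i y) sm)
      (fun y => Df i (upd xm i y) sm - Dg i (upd xm i y) sm) (xm i) (Lf i xm sm - Lg i xm sm) rho
      ltac:(unfold rho; lra).
    intros H. have := H ltac:(intros y hy; rewrite upd_id; apply Hmax; split; [left; apply Hin; exact hy| exact Hsm])
      Hd (derivable_pt_lim_minus _ _ _ _ _ (Hf2 i) (Hg2 i)). lra.
Qed.

Lemma Rpower_pos x y : 0 < Rpower x y.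
Proof. apply exp_pos. Qed.

Lemma Rpower_le_base x y p : 0 <= p -> 0 < x <= y -> Rpower x p <= Rpower y p.
Proof. apply Rle_Rpower_l. Qed.

Lemma Rpower_lt_base x y p : 0 < p -> 0 < x < y -> Rpower x p < Rpower y p.
Proof. apply Rlt_Rpower_l. Qed.

Lemma Rpower_neg_anti x y p : 0 <= p -> 0 < x <= y -> Rpower y (- p) <= Rpower x (- p).
Proof.
  intros Hp Hxy. rewrite !Rpower_Ropp. apply Rinv_le_contravar; [apply Rpower_pos|].
  by apply Rpower_le_base.
Qed.

Lemma deriv_Rpower_comp (h : R -> R) y d p : derivable_pt_lim h y d -> 0 < h y ->
  derivable_pt_lim (fun z => Rpower (h z) p) y (p * Rpower (h y) (p - 1) * d).
Proof.
  intros Hd Hp.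
  exact (derivable_pt_lim_comp h (fun z => Rpower z p) y d _ Hd (derivable_pt_lim_power _ p Hp)).
Qed.

Lemma Rpower_superadd A B q : 0 < A -> 0 < B -> 1 <= q -> Rpower A q + Rpower B q <= Rpower (A + B) q.
Proof.
  intros HA HB Hq.
  have E : forall X, 0 < X -> Rpower X q = X * Rpower X (q - 1).
  { intros X hX. replace q with (1 + (q - 1)) at 1 by ring. rewrite Rpower_plus Rpower_1 //. }
  rewrite (E A) // (E B) // (E (A+B)); [|lra].
  have h1 := Rpower_le_base A (A + B) (q - 1) ltac:(lra) ltac:(lra).
  have h2 := Rpower_le_base B (A + B) (q - 1) ltac:(lra) ltac:(lra).
  nra.
Qed.

Lemma Rpower_mult_pos x y p : 0 < x -> 0 < y -> Rpower (x * y) p = Rpower x p * Rpower y p.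
Proof. intros; by rewrite Rpower_mult_distr. Qed.

Section ODE.
Variable q : R.
Hypothesis Hq : 1 < q.
Definition aq := 1 / (q - 1).
Definition cq := Rpower aq aq.

Lemma aq_pos : 0 < aq.
Proof. unfold aq. apply Rdiv_lt_0_compat; lra. Qed.

Lemma aq_q : aq * q = aq + 1.
Proof. unfold aq. field. lra. Qed.

Lemma cq_pos : 0 < cq.
Proof. apply Rpower_pos. Qed.

Lemma cq_pow : Rpower cq q = aq * cq.
Proof.
  unfold cq. rewrite Rpower_mult aq_q Rpower_plus Rpower_1; [ring| apply aq_pos].
Qed.

Lemma psi_pow T : 0 < T -> Rpower (cq * Rpower T (- aq)) q = aq * cq * Rpower T (- aq - 1).
Proof.
  intros HT. rewrite Rpower_mult_pos; [|apply cq_pos| apply Rpower_pos].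
  rewrite cq_pow Rpower_mult. f_equal. f_equal. have := aq_q. lra.
Qed.

Lemma psi_deriv (g : R -> R) s d : derivable_pt_lim g s d -> 0 < g s ->
  derivable_pt_lim (fun y => cq * Rpower (g y) (- aq)) s (- (aq * cq * Rpower (g s) (- aq - 1)) * d).
Proof.
  intros Hg Hp.
  have := derivable_pt_lim_scal _ cq _ _ (deriv_Rpower_comp g s d (- aq) Hg Hp).
  rewrite /mult_real_fct. replace (- aq - 1) with (-aq - 1) by ring.
  intros H. replace (- (aq * cq * Rpower (g s) (- aq - 1)) * d) with (cq * (- aq * Rpower (g s) (- aq - 1) * d)) by ring.
  exact H.
Qed.
End ODE.

Lemma cont_eps f x0 : continuity_pt f x0 -> forall eps, eps > 0 -> exists delta, delta > 0 /\
  forall x, Rabs (x - x0) < delta -> Rabs (f x - f x0) < eps.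
Proof.
  intros H eps He. destruct (H eps He) as [alp [Ha Hb]]. exists alp; split; [lra|].
  intros x hx. destruct (Req_dec x x0) as [->|hne]; [rewrite Rminus_diag Rabs_R0; lra|].
  apply (Hb x). split; [split; [constructor| auto]| simpl; unfold R_dist; exact hx].
Qed.

Lemma deriv_cont f x l : derivable_pt_lim f x l -> continuity_pt f x.
Proof. intros H. apply (derivable_continuous_pt f x (exist _ l H)). Qed.

Definition contx {N} (B : point N -> R) x := forall eps, eps > 0 -> exists delta, delta > 0 /\
  forall y, dist x y < delta -> Rabs (B y - B x) < eps.

Lemma contx_sqdist N (x0 x : point N) : contx (fun y => sqdist y x0) x.
Proof.
  intros eps He.
  have Hd := dist_nonneg _ x x0.
  exists (Rmin 1 (eps / (2 * dist x x0 + 1))); split.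
  { apply Rmin_pos; [lra| apply Rdiv_lt_0_compat; lra]. }
  intros y hy. rewrite -!dist_sq.
  have h1 := dist_triang _ y x x0. have h2 := dist_triang _ x y x0.
  rewrite (dist_sym _ y x) in h1.
  have hm1 := Rmin_l 1 (eps / (2 * dist x x0 + 1)). have hm2 := Rmin_r 1 (eps / (2 * dist x x0 + 1)).
  have hy0 := dist_nonneg _ x y. have hyx := dist_nonneg _ y x0.
  set e := dist x y in hy h1 h2 hy0 hm1 hm2 *.
  have he : e * (2 * dist x x0 + 1) < eps.
  { have : e < eps / (2 * dist x x0 + 1) by lra.
    intros h. apply (Rmult_lt_compat_r (2*dist x x0+1)) in h; [|lra]. unfold Rdiv in h. rewrite Rmult_assoc Rinv_l in h; lra. }
  have hb : Rabs (dist y x0 - dist x x0) <= e by (unfold Rabs; destruct Rcase_abs; lra).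
  replace (dist y x0 ^ 2 - dist x x0 ^ 2) with ((dist y x0 - dist x x0) * (dist y x0 + dist x x0)) by ring.
  rewrite Rabs_mult. rewrite (Rabs_pos_eq (dist y x0 + dist x x0)); [|lra].
  have ? := Rabs_pos (dist y x0 - dist x x0). nra.
Qed.

Lemma contx_comp N (F : R -> R) (B : point N -> R) x : continuity_pt F (B x) -> contx B x -> contx (fun y => F (B y)) x.
Proof.
  intros HF HB eps He. destruct (cont_eps F (B x) HF eps He) as [d1 [Hd1 H1]].
  destruct (HB d1 Hd1) as [d2 [Hd2 H2]]. exists d2; split; auto.
Qed.

Lemma contC_sep N (C : point N -> R -> Prop) (A : R -> R) (B : point N -> R) :
  (forall x s, C x s -> continuity_pt A s) -> (forall x s, C x s -> contx B x) ->
  contC C (fun x s => A s + B x).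
Proof.
  intros HA HB x s Hc eps He.
  destruct (cont_eps A s (HA x s Hc) (eps/2)) as [d1 [Hd1 H1]]; [lra|].
  destruct (HB x s Hc (eps/2)) as [d2 [Hd2 H2]]; [lra|].
  exists (Rmin d1 d2); split; [apply Rmin_pos; lra|].
  intros y r _ hy hr. have := Rmin_l d1 d2. have := Rmin_r d1 d2. intros h3 h4.
  have e1 := H1 r ltac:(lra). have e2 := H2 y ltac:(lra).
  have := Rabs_triang (A r - A s) (B y - B x). replace (A r - A s + (B y - B x)) with (A r + B y - (A s + B x)) by ring. lra.
Qed.

Lemma contC_minus N (C : point N -> R -> Prop) f g : contC C f -> contC C g -> contC C (fun x s => f x s - g x s).
Proof.
  intros Hf Hg x s Hc eps He.
  destruct (Hf x s Hc (eps/2)) as [d1 [Hd1 H1]]; [lra|].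
  destruct (Hg x s Hc (eps/2)) as [d2 [Hd2 H2]]; [lra|].
  exists (Rmin d1 d2); split; [apply Rmin_pos; lra|].
  intros y r hc hy hr. have := Rmin_l d1 d2. have := Rmin_r d1 d2. intros h3 h4.
  have e1 := H1 y r hc ltac:(lra) ltac:(lra). have e2 := H2 y r hc ltac:(lra) ltac:(lra).
  have := Rabs_triang (f y r - f x s) (- (g y r - g x s)). rewrite Rabs_Ropp.
  replace (f y r - f x s + - (g y r - g x s)) with (f y r - g y r - (f x s - g x s)) by ring. lra.
Qed.

Lemma contC_of_cont_on N (Omega : point N -> Prop) (C : point N -> R -> Prop) u :
  cont_on Omega u -> (forall x s, C x s -> Omega x /\ 0 < s) -> contC C u.
Proof.
  intros Hu HC x s Hc eps He. destruct (HC x s Hc) as [Ho Hs].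
  destruct (Hu x s Ho Hs eps He) as [d [Hd H]]. exists d; split; auto.
  intros y r hc hy hr. destruct (HC y r hc). apply H; auto.
Qed.

Lemma deriv_quad A B c y : derivable_pt_lim (fun z => A + B * (z - c)^2) y (2 * B * (y - c)).
Proof.
  intros eps He. exists (mkposreal (eps / (Rabs B + 1)) ltac:(apply Rdiv_lt_0_compat; [lra| have := Rabs_pos B; lra])).
  intros h hn hh. simpl in hh.
  replace ((A + B * (y + h - c) ^ 2 - (A + B * (y - c) ^ 2)) / h - 2 * B * (y - c)) with (B * h) by (field; auto).
  rewrite Rabs_mult. have := Rabs_pos B. have := Rabs_pos h. intros h1 h2.
  have h3 : Rabs h * (Rabs B + 1) < eps.
  { apply (Rmult_lt_compat_r (Rabs B + 1)) in hh; [|lra]. unfold Rdiv in hh. rewrite Rmult_assoc Rinv_l in hh; lra. }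
  nra.
Qed.

Lemma deriv_lin A B y : derivable_pt_lim (fun z => A + B * z) y B.
Proof.
  intros eps He. exists (mkposreal eps He). intros h hn hh.
  replace ((A + B * (y + h) - (A + B * y)) / h - B) with 0 by (field; auto). rewrite Rabs_R0; lra.
Qed.

Lemma sqdist_upd_fun N (x x0 : point N) i :
  (fun y => sqdist (upd x i y) x0) = (fun y => (sqdist x x0 - (x i - x0 i)^2) + 1 * (y - x0 i)^2).
Proof. apply functional_extensionality => y. rewrite sqdist_upd. ring. Qed.

Lemma deriv_sqdist_upd N (x x0 : point N) i y :
  derivable_pt_lim (fun z => sqdist (upd x i z) x0) y (2 * (y - x0 i)).
Proof. rewrite sqdist_upd_fun. have := deriv_quad (sqdist x x0 - (x i - x0 i)^2) 1 (x0 i) y. by rewrite Rmult_1_r. Qed.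

Lemma deriv_const_plus (f : R -> R) A y l : derivable_pt_lim f y l -> derivable_pt_lim (fun z => A + f z) y l.
Proof.
  intros H. have := derivable_pt_lim_plus (fun _ => A) f y 0 l (derivable_pt_lim_const A y) H.
  by rewrite Rplus_0_l.
Qed.

Lemma deriv_scal (f : R -> R) A y l : derivable_pt_lim f y l -> derivable_pt_lim (fun z => A * f z) y (A * l).
Proof. intros H. exact (derivable_pt_lim_scal f A y l H). Qed.

Lemma deriv_shift c s : derivable_pt_lim (fun y => y + c) s 1.
Proof.
  have E : (fun y => y + c) = (fun z => c + 1 * z) by (apply functional_extensionality => z; ring).
  rewrite E; apply deriv_lin.
Qed.

Section Sub.
Variable q : R.
Hypothesis Hq : 1 < q.
Variable N : nat.
Variables (x0 : point N) (lam sg K : R).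

Definition zsub (x : point N) (s : R) := lam * (cq q * Rpower (s + sg) (- aq q)) + (- K) * sqdist x x0.
Definition Dzsub (i : 'I_N) (x : point N) (s : R) := - K * (2 * (x i - x0 i)).
Definition Lzsub (i : 'I_N) (x : point N) (s : R) := - K * 2.
Definition Tzsub (x : point N) (s : R) := lam * (- (aq q * cq q * Rpower (s + sg) (- aq q - 1)) * 1).

Lemma zsub_derivs (P : point N -> R -> Prop) : (forall x s, P x s -> 0 < s + sg) -> derivs P zsub Dzsub Lzsub Tzsub.
Proof.
  intros HP x s Hx. split; [|split].
  - intros i. rewrite /zsub /Dzsub.
    apply deriv_const_plus. have := deriv_scal _ (- K) _ _ (deriv_sqdist_upd N x x0 i (x i)). done.
  - intros i. rewrite /Dzsub /Lzsub.
    have E : (fun y => - K * (2 * (upd x i y i - x0 i))) = (fun y => (- K * 2 * - x0 i) + (- K * 2) * y).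
    { apply functional_extensionality => y. rewrite upd_same. ring. }
    rewrite E. apply deriv_lin.
  - rewrite /zsub /Tzsub.
    have H1 := psi_deriv q (fun y => y + sg) s 1 (deriv_shift sg s) (HP x s Hx).
    have H2 := deriv_scal _ lam _ _ H1.
    have H3 := derivable_pt_lim_plus _ (fun _ => - K * sqdist x x0) s _ 0 H2 (derivable_pt_lim_const _ s).
    rewrite Rplus_0_r in H3. exact H3.
Qed.
End Sub.

Section Super.
Variable q : R.
Hypothesis Hq : 1 < q.
Variable N : nat.
Variables (x0 : point N) (t1 lamV R2 be : R).

Definition Vsup (x : point N) := lamV * Rpower (R2 - sqdist x x0) (- be).
Definition Wsup (x : point N) (s : R) := cq q * Rpower (s - t1) (- aq q) + Vsup x.
Definition DWsup (i : 'I_N) (x : point N) (s : R) :=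
  lamV * ((- be) * Rpower (R2 - sqdist x x0) (- be - 1) * (0 - 2 * (x i - x0 i))).
Definition LWsup (i : 'I_N) (x : point N) (s : R) :=
  lamV * ((- be) * ((- be - 1) * Rpower (R2 - sqdist x x0) (- be - 1 - 1) * (0 - 2 * (x i - x0 i))) * (0 - 2 * (x i - x0 i))
          + (- be) * Rpower (R2 - sqdist x x0) (- be - 1) * (0 - 2)).
Definition TWsup (x : point N) (s : R) := - (aq q * cq q * Rpower (s - t1) (- aq q - 1)) * 1.

Lemma deriv_S (x : point N) i y : derivable_pt_lim (fun z => R2 - sqdist (upd x i z) x0) y (0 - 2 * (y - x0 i)).
Proof. apply derivable_pt_lim_minus; [apply derivable_pt_lim_const| apply deriv_sqdist_upd]. Qed.

Lemma Wsup_derivs (P : point N -> R -> Prop) :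
  (forall x s, P x s -> 0 < s - t1 /\ 0 < R2 - sqdist x x0) -> derivs P Wsup DWsup LWsup TWsup.
Proof.
  intros HP x s Hx. destruct (HP x s Hx) as [Hs HS]. split; [|split].
  - intros i. rewrite /Wsup /Vsup /DWsup.
    apply deriv_const_plus. apply deriv_scal.
    have := deriv_Rpower_comp _ (x i) _ (- be) (deriv_S x i (x i)). rewrite upd_id. intros H; exact (H HS).
  - intros i. rewrite /DWsup /LWsup.
    have E : (fun y => lamV * (- be * Rpower (R2 - sqdist (upd x i y) x0) (- be - 1) * (0 - 2 * (upd x i y i - x0 i))))
           = (fun y => lamV * ((fun z => - be * Rpower (R2 - sqdist (upd x i z) x0) (- be - 1)) y * (fun z => 0 - 2 * (z - x0 i)) y)).
    { apply functional_extensionality => y. by rewrite upd_same. }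
    rewrite E. apply deriv_scal.
    have H1 : derivable_pt_lim (fun z => - be * Rpower (R2 - sqdist (upd x i z) x0) (- be - 1)) (x i)
          (- be * ((- be - 1) * Rpower (R2 - sqdist x x0) (- be - 1 - 1) * (0 - 2 * (x i - x0 i)))).
    { apply deriv_scal. have := deriv_Rpower_comp _ (x i) _ (- be - 1) (deriv_S x i (x i)). rewrite upd_id. intros H; exact (H HS). }
    have H2 : derivable_pt_lim (fun z => 0 - 2 * (z - x0 i)) (x i) (0 - 2).
    { have E2 : (fun z => 0 - 2 * (z - x0 i)) = (fun z => (2 * x0 i) + (0 - 2) * z) by (apply functional_extensionality => z; ring).
      rewrite E2. apply deriv_lin. }
    have := derivable_pt_lim_mult _ _ _ _ _ H1 H2. rewrite /mult_fct upd_id. done.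
  - rewrite /Wsup /TWsup.
    have H1 := psi_deriv q (fun y => y - t1) s 1 (deriv_shift (- t1) s) Hs.
    have H3 := derivable_pt_lim_plus _ (fun _ => Vsup x) s _ 0 H1 (derivable_pt_lim_const _ s).
    rewrite Rplus_0_r in H3. exact H3.
Qed.
End Super.


Definition Nn N := INR (length (enum 'I_N)).

Lemma Nn_pos N : 0 <= Nn N.
Proof. apply pos_INR. Qed.

Lemma lap_Lzsub N K (x : point N) s : lap (Lzsub N K) x s = Nn N * (- K * 2).
Proof. by rewrite /lap /Lzsub fs_const. Qed.

Lemma lap_LWsup N (x0 : point N) lamV R2 be x s :
  lap (LWsup N x0 lamV R2 be) x s =
  lamV * (4 * be * (be + 1) * sqdist x x0 * Rpower (R2 - sqdist x x0) (- be - 1 - 1)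
          + 2 * be * Nn N * Rpower (R2 - sqdist x x0) (- be - 1)).
Proof.
  rewrite /lap /LWsup.
  set P2 := Rpower _ (- be - 1 - 1). set P1 := Rpower _ (- be - 1).
  rewrite (fs_ext _ _ _ (fun i => (lamV * 4 * be * (be + 1) * P2) * (x i - x0 i)^2 + (lamV * 2 * be * P1))).
  - rewrite fs_plus fs_scal fs_const -sqdist_fs /Nn. clearbody P1 P2. set M := INR _. set Q := sqdist x x0. ring.
  - intros i. ring.
Qed.

Lemma super_ineq q N (x0 : point N) R2 x s :
  1 < q -> 0 < R2 -> 0 < R2 - sqdist x x0 ->
  let be := 2 * aq q in
  let Qc := be * R2 * (2 * Nn N + 4 * be + 4) in
  let lamV := Rpower Qc (aq q) in
  lap (LWsup N x0 lamV R2 be) x s <= Rpower (Vsup N x0 lamV R2 be x) q.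
Proof.
  intros Hq HR HS be Qc lamV.
  have ha := aq_pos q Hq.
  have hbe : 0 < be by unfold be; lra.
  have hN := Nn_pos N.
  have hQ : 0 < Qc by (unfold Qc; apply Rmult_lt_0_compat; [nra| lra]).
  have hl : 0 < lamV by apply Rpower_pos.
  rewrite (lap_LWsup N x0).
  set S := R2 - sqdist x x0 in HS |- *.
  have hrho := sqdist_nonneg _ x x0.
  have hSR : S <= R2 by (unfold S; lra).
  have Erho : sqdist x x0 = R2 - S by (unfold S; ring).
  rewrite /Vsup -/S.
  rewrite Rpower_mult_pos //; [|apply Rpower_pos].
  rewrite Rpower_mult.
  have E1 : Rpower lamV q = lamV * Qc.
  { replace q with (1 + (q - 1)) at 1 by ring. rewrite Rpower_plus Rpower_1 //.
    rewrite /lamV Rpower_mult. replace (aq q * (q - 1)) with 1 by (unfold aq; field; lra).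
    rewrite Rpower_1 //. }
  have E2 : - be * q = - be - 1 - 1.
  { unfold be. have := aq_q q Hq. lra. }
  have E3 : Rpower S (- be - 1) = S * Rpower S (- be - 1 - 1).
  { replace (- be - 1) with (1 + (- be - 1 - 1)) at 1 by ring. rewrite Rpower_plus Rpower_1 //. }
  rewrite E1 E2 E3 Erho.
  set P2 := Rpower S (- be - 1 - 1).
  have hP : 0 < P2 by apply Rpower_pos.
  have key : 4 * be * (be + 1) * (R2 - S) + 2 * be * Nn N * S <= Qc.
  { unfold Qc. have h1 : 0 <= be * Nn N by nra. nra. }
  have := Rmult_le_compat_r (lamV * P2) _ _ ltac:(nra) key. nra.
Qed.

Lemma big_enough p C M : 0 < p -> 0 < C -> exists eta, 0 < eta /\ forall y, 0 < y <= eta -> M <= C * Rpower y (- p).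
Proof.
  intros Hp HC. pose X := (Rabs M + 1) / C.
  have hX : 0 < X by (unfold X; apply Rdiv_lt_0_compat; [have := Rabs_pos M; lra| lra]).
  exists (Rpower X (- / p)); split; [apply Rpower_pos|].
  intros y hy.
  have h1 := Rpower_neg_anti y (Rpower X (- / p)) p ltac:(lra) hy.
  rewrite Rpower_mult in h1. replace (- / p * - p) with 1 in h1 by (field; lra).
  rewrite Rpower_1 // in h1.
  have h2 : C * X <= C * Rpower y (- p) by apply Rmult_le_compat_l; lra.
  have : C * X = Rabs M + 1 by (unfold X; field; lra).
  have := Rle_abs M. lra.
Qed.

Lemma sqdist_lt_of_dist N (x0 x : point N) r : 0 <= r -> dist x0 x < r -> sqdist x x0 < r * r.
Proof.
  intros hr h. rewrite sqdist_sym -dist_sq. have := dist_nonneg _ x0 x. simpl. nra.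
Qed.

Lemma sqdist_le_of_dist N (x0 x : point N) r : dist x0 x <= r -> sqdist x x0 <= r * r.
Proof.
  intros h. rewrite sqdist_sym -dist_sq. have := dist_nonneg _ x0 x. simpl. nra.
Qed.

Lemma sqdist_eq_of_dist N (x0 x : point N) r : dist x0 x = r -> sqdist x x0 = r * r.
Proof. intros h. rewrite sqdist_sym -dist_sq h. simpl; ring. Qed.

Lemma sqdist_refl N (x : point N) : sqdist x x = 0.
Proof. rewrite -dist_sq dist_refl. simpl; ring. Qed.

Lemma Vsup_pos N (x0 : point N) lamV R2 be x : 0 < lamV -> 0 < Vsup N x0 lamV R2 be x.
Proof. intros h. rewrite /Vsup. have := Rpower_pos (R2 - sqdist x x0) (- be). nra. Qed.

Lemma Vsup_contx N (x0 : point N) lamV R2 be x : 0 < R2 - sqdist x x0 -> contx (Vsup N x0 lamV R2 be) x.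
Proof.
  intros h. apply (contx_comp N (fun v => lamV * Rpower (R2 - v) (- be)) (fun y => sqdist y x0)); [|apply contx_sqdist].
  eapply deriv_cont. apply deriv_scal. apply (deriv_Rpower_comp (fun v => R2 - v)); [|exact h].
  apply derivable_pt_lim_minus; [apply derivable_pt_lim_const| apply derivable_pt_lim_id].
Qed.

Lemma u_derivs N (Omega : point N -> Prop) u Du D2u Dtu (P : point N -> R -> Prop) :
  C21_with Omega u Du D2u Dtu -> (forall x s, P x s -> Omega x /\ 0 < s) -> derivs P u Du (fun i => D2u i i) Dtu.
Proof.
  intros [H _] HP x s Hx. destruct (HP x s Hx) as [h1 h2]. destruct (H x s h1 h2) as [a [b c]].
  split; [exact a| split; [intros i; exact (b i i)| exact c]].
Qed.

Lemma upper_bound q N (Omega : point N -> Prop) u Du D2u Dtu (x0 : point N) Rb t th :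
  1 < q ->
  (forall x t, Omega x -> 0 < t -> 0 < u x t) ->
  C21_with Omega u Du D2u Dtu ->
  (forall x t, Omega x -> 0 < t -> Dtu x t - laplacian_of D2u x t + Rpower (u x t) q = 0) ->
  0 < Rb -> (forall y, dist x0 y <= Rb -> Omega y) -> 0 < t -> 0 < th < 1 ->
  let be := 2 * aq q in let Qc := be * (Rb*Rb) * (2 * Nn N + 4 * be + 4) in let lamV := Rpower Qc (aq q) in
  u x0 t <= cq q * Rpower ((1 - th) * t) (- aq q) + Vsup N x0 lamV (Rb*Rb) be x0.
Proof.
  intros Hq Hpos HC Hpde HR HOm Ht Hth be Qc lamV.
  have ha := aq_pos q Hq. have hc := cq_pos q.
  have hbe : 0 < be by unfold be; lra.
  have hN := Nn_pos N.
  have hQ : 0 < Qc by (unfold Qc; apply Rmult_lt_0_compat; [apply Rmult_lt_0_compat; [lra| nra]| lra]).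
  have hl : 0 < lamV by apply Rpower_pos.
  pose t1 := th * t.
  have ht1 : 0 < t1 < t by (unfold t1; nra).
  destruct (EVT N (cyl x0 Rb t1 t) u (cyl_bounded _ _ _ _ _) (cyl_closed _ _ _ _ _)) as [xm [sm [Hcm Hmax]]].
  { exists x0, t1. split; [rewrite dist_refl; lra| lra]. }
  { apply (contC_of_cont_on N Omega); [apply HC|]. intros x s [h1 h2]; split; [apply HOm; exact h1| lra]. }
  set Um := u xm sm in Hmax.
  destruct (big_enough (aq q) (cq q) Um ha hc) as [e1 [he1 He1]].
  destruct (big_enough be lamV Um hbe hl) as [e2 [he2 He2]].
  pose et := Rmin (Rmin e1 e2) (Rb * Rb / 2).
  have het : 0 < et by (unfold et; repeat apply Rmin_pos; nra).
  have het1 : et <= e1 by (unfold et; have ? := Rmin_l (Rmin e1 e2) (Rb*Rb/2); have ? := Rmin_l e1 e2; lra).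
  have het2 : et <= e2 by (unfold et; have ? := Rmin_l (Rmin e1 e2) (Rb*Rb/2); have ? := Rmin_r e1 e2; lra).
  have het3 : et <= Rb * Rb / 2 by (unfold et; apply Rmin_r).
  pose rho := sqrt (Rb * Rb - et).
  have hrho2 : rho * rho = Rb * Rb - et by (unfold rho; apply sqrt_sqrt; nra).
  have hrho0 : 0 <= rho by apply sqrt_pos.
  have hrhoR : rho < Rb by (destruct (Rlt_le_dec rho Rb); auto; nra).
  pose t2 := t1 + Rmin e1 ((t - t1) / 2).
  have hm1 := Rmin_l e1 ((t - t1) / 2). have hm2 := Rmin_r e1 ((t - t1) / 2).
  have hm3 : 0 < Rmin e1 ((t - t1) / 2) by (apply Rmin_pos; lra).
  have ht2 : t1 < t2 < t by (unfold t2; lra).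
  have Hfin : u x0 t <= Wsup q N x0 t1 lamV (Rb*Rb) be x0 t.
  2: { rewrite /Wsup in Hfin. replace (t - t1) with ((1 - th) * t) in Hfin by (unfold t1; ring). exact Hfin. }
  apply (max_principle N x0 rho t2 t u (Wsup q N x0 t1 lamV (Rb*Rb) be)
     Du (fun i => D2u i i) Dtu (DWsup N x0 lamV (Rb*Rb) be) (LWsup N x0 lamV (Rb*Rb) be) (TWsup q N t1)); [lra| | | | | | | rewrite dist_refl; lra| lra].
  - apply (u_derivs N Omega); auto. intros x s [h1 h2]. split; [apply HOm; lra| lra].
  - apply Wsup_derivs. intros x s [h1 h2]. split; [lra|].
    have := sqdist_lt_of_dist N x0 x rho hrho0 h1. lra.
  - apply contC_minus.
    + apply (contC_of_cont_on N Omega); [apply HC|]. intros x s [h1 h2]; split; [apply HOm; lra| lra].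
    + apply (contC_sep N _ (fun s => cq q * Rpower (s - t1) (- aq q)) (Vsup N x0 lamV (Rb*Rb) be)).
      * intros x s [h1 h2]. eapply deriv_cont. apply (psi_deriv q (fun y => y - t1) s 1 (deriv_shift (- t1) s)). lra.
      * intros x s [h1 h2]. apply Vsup_contx. have := sqdist_le_of_dist N x0 x rho h1. nra.
  - intros x hx. have hu := Hmax x t2 ltac:(split; lra).
    have hU := He1 (t2 - t1) ltac:(unfold t2; lra).
    have hV := Vsup_pos N x0 lamV (Rb*Rb) be x hl. rewrite /Wsup. lra.
  - intros x s hx hs. have hu := Hmax x s ltac:(split; lra).
    have hS := sqdist_eq_of_dist N x0 x rho hx.
    have hU := He2 (Rb * Rb - sqdist x x0) ltac:(lra).
    have := Rpower_pos (s - t1) (- aq q). rewrite /Wsup /Vsup. nra.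
  - intros x s hx hs Hlt HT HL.
    have hOm : Omega x by apply HOm; lra.
    have Hp := Hpde x s hOm ltac:(lra).
    change (laplacian_of D2u x s) with (lap (fun i => D2u i i) x s) in Hp.
    have hS : 0 < Rb * Rb - sqdist x x0 by (have ? := sqdist_lt_of_dist N x0 x rho hrho0 hx; lra).
    have Hsup := super_ineq q N x0 (Rb*Rb) x s Hq ltac:(nra) hS.
    simpl in Hsup. fold be Qc lamV in Hsup.
    have hs1 : 0 < s - t1 by lra.
    have Hpsi := psi_pow q Hq (s - t1) hs1.
    have hphi : 0 < cq q * Rpower (s - t1) (- aq q) by (have ? := Rpower_pos (s - t1) (- aq q); nra).
    have hV := Vsup_pos N x0 lamV (Rb*Rb) be x hl.
    have Hadd := Rpower_superadd _ _ q hphi hV ltac:(lra).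
    have hW : 0 < Wsup q N x0 t1 lamV (Rb*Rb) be x s by (rewrite /Wsup; lra).
    have Hlt2 := Rpower_lt_base _ _ q ltac:(lra) (conj hW Hlt).
    rewrite /TWsup in HT. rewrite /Wsup in Hadd Hlt2.
    lra.
Qed.

Lemma Rpower_one_base y : Rpower 1 y = 1.
Proof. by rewrite /Rpower ln_1 Rmult_0_r exp_0. Qed.

Lemma lower_identity q N lam sg t : 1 < q -> 0 < lam < 1 -> 0 < sg -> 0 < t ->
  let L := Rpower lam (q - 1) in
  let A := (2 * Nn N + 1) * Rpower sg (- aq q) / ((1 - L) * aq q * Rpower (1 + sg) (- aq q - 1)) in
  let K := lam * (1 - L) * (aq q * cq q * Rpower (t + sg * t) (- aq q - 1)) / (2 * Nn N + 1) in
  K * (A * t) = lam * (cq q * Rpower (sg * t) (- aq q)).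
Proof.
  intros Hq Hl Hs Ht L A K.
  have hL : L < 1.
  { have h : Rpower lam (q - 1) < Rpower 1 (q - 1) by (apply Rpower_lt_base; lra).
    rewrite Rpower_one_base in h. exact h. }
  have ha := aq_pos q Hq. have hN := Nn_pos N.
  have E1 : Rpower (t + sg * t) (- aq q - 1) = Rpower (1 + sg) (- aq q - 1) * Rpower t (- aq q - 1).
  { replace (t + sg * t) with ((1 + sg) * t) by ring. apply Rpower_mult_pos; lra. }
  have E2 : Rpower (sg * t) (- aq q) = Rpower sg (- aq q) * Rpower t (- aq q) by apply Rpower_mult_pos.
  have E3 : Rpower t (- aq q) = t * Rpower t (- aq q - 1).
  { replace (- aq q) with (1 + (- aq q - 1)) at 1 by ring. rewrite Rpower_plus Rpower_1 //. }
  unfold K, A. rewrite E1 E2 E3.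
  have := Rpower_pos (1 + sg) (- aq q - 1). intros h1.
  field. repeat split; lra.
Qed.

Lemma lower_bound q N (Omega : point N -> Prop) u Du D2u Dtu Rb lam sg :
  1 < q ->
  (forall x t, Omega x -> 0 < t -> 0 < u x t) ->
  C21_with Omega u Du D2u Dtu ->
  (forall x t, Omega x -> 0 < t -> Dtu x t - laplacian_of D2u x t + Rpower (u x t) q = 0) ->
  (forall (x0 : point N) r M, (forall y, dist x0 y <= r -> Omega y) ->
     exists delta, delta > 0 /\ forall x s, dist x0 x <= r -> 0 < s < delta -> M < u x s) ->
  0 < Rb -> 0 < lam < 1 -> 0 < sg ->
  exists delta1, delta1 > 0 /\ forall (x0 : point N) t, (forall y, dist x0 y <= Rb -> Omega y) -> 0 < t < delta1 ->
    lam * (cq q * Rpower (t + sg * t) (- aq q)) <= u x0 t.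
Proof.
  intros Hq Hpos HC Hpde Hlarge HR Hl Hs.
  have ha := aq_pos q Hq. have hc := cq_pos q. have hN := Nn_pos N.
  pose L := Rpower lam (q - 1).
  have hL : L < 1.
  { have h : Rpower lam (q - 1) < Rpower 1 (q - 1) by (apply Rpower_lt_base; lra).
    rewrite Rpower_one_base in h. exact h. }
  pose A := (2 * Nn N + 1) * Rpower sg (- aq q) / ((1 - L) * aq q * Rpower (1 + sg) (- aq q - 1)).
  have hA : 0 < A.
  { unfold A. apply Rdiv_lt_0_compat.
    - have := Rpower_pos sg (- aq q). nra.
    - have := Rpower_pos (1 + sg) (- aq q - 1). apply Rmult_lt_0_compat; nra. }
  exists (Rb * Rb / A). split. { apply Rdiv_lt_0_compat; nra. }
  intros x0 t HOm Ht.
  have Ht0 : 0 < t by lra.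
  have hAt : A * t < Rb * Rb.
  { have h : A * t < A * (Rb * Rb / A) by (apply Rmult_lt_compat_l; lra).
    replace (A * (Rb * Rb / A)) with (Rb * Rb) in h by (field; lra). exact h. }
  pose K := lam * (1 - L) * (aq q * cq q * Rpower (t + sg * t) (- aq q - 1)) / (2 * Nn N + 1).
  have hK : 0 < K.
  { unfold K. apply Rdiv_lt_0_compat; [|lra]. have := Rpower_pos (t + sg * t) (- aq q - 1).
    intros h. apply Rmult_lt_0_compat; [apply Rmult_lt_0_compat; lra| apply Rmult_lt_0_compat; [apply Rmult_lt_0_compat; lra| exact h]]. }
  have Hid := lower_identity q N lam sg t Hq Hl Hs Ht0. simpl in Hid. fold L A K in Hid.
  pose r := sqrt (A * t).
  have hr2 : r * r = A * t by (unfold r; apply sqrt_sqrt; nra).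
  have hr0 : 0 <= r by apply sqrt_pos.
  have hrR : r < Rb by (destruct (Rlt_le_dec r Rb); auto; nra).
  pose sgt := sg * t.
  have hsgt : 0 < sgt by (unfold sgt; nra).
  pose M := lam * (cq q * Rpower sgt (- aq q)).
  destruct (Hlarge x0 r M) as [dl [Hdl Hdl']]. { intros y hy; apply HOm; lra. }
  pose t1 := Rmin dl t / 2.
  have ht1 : 0 < t1 < t by (unfold t1; have ? := Rmin_r dl t; have ? := Rmin_pos dl t Hdl Ht0; lra).
  have ht1d : t1 < dl by (unfold t1; have ? := Rmin_l dl t; have ? := Rmin_pos dl t Hdl Ht0; lra).
  have Hfin : zsub q N x0 lam sgt K x0 t <= u x0 t.
  2: { rewrite /zsub sqdist_refl Rmult_0_r Rplus_0_r in Hfin. exact Hfin. }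
  apply (max_principle N x0 r t1 t (zsub q N x0 lam sgt K) u
     (Dzsub N x0 K) (Lzsub N K) (Tzsub q N lam sgt) Du (fun i => D2u i i) Dtu); [lra| | | | | | | rewrite dist_refl; lra| lra].
  - apply zsub_derivs. intros x s [h1 h2]. unfold sgt in *; lra.
  - apply (u_derivs N Omega); auto. intros x s [h1 h2]. split; [apply HOm; lra| lra].
  - apply contC_minus.
    + apply (contC_sep N _ (fun s => lam * (cq q * Rpower (s + sgt) (- aq q))) (fun x => - K * sqdist x x0)).
      * intros x s [h1 h2]. eapply deriv_cont. apply deriv_scal.
        apply (psi_deriv q (fun y => y + sgt) s 1 (deriv_shift sgt s)). lra.
      * intros x s [h1 h2]. apply (contx_comp N (fun v => - K * v) (fun y => sqdist y x0)); [|apply contx_sqdist].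
        eapply deriv_cont. apply (deriv_scal (fun v => v)). apply derivable_pt_lim_id.
    + apply (contC_of_cont_on N Omega); [apply HC|]. intros x s [h1 h2]; split; [apply HOm; lra| lra].
  - intros x hx.
    have hM := Hdl' x t1 hx ltac:(lra).
    have h1 := Rpower_neg_anti sgt (t1 + sgt) (aq q) ltac:(lra) ltac:(lra).
    have h2 := sqdist_nonneg _ x x0.
    have e1 : lam * (cq q * Rpower (t1 + sgt) (- aq q)) <= lam * (cq q * Rpower sgt (- aq q)).
    { apply Rmult_le_compat_l; [lra|]. apply Rmult_le_compat_l; lra. }
    have e2 : 0 <= K * sqdist x x0 by (apply Rmult_le_pos; lra).
    rewrite /zsub. unfold M in hM. lra.
  - intros x s hx hs.
    have hS := sqdist_eq_of_dist N x0 x r hx.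
    have h1 := Rpower_neg_anti sgt (s + sgt) (aq q) ltac:(lra) ltac:(lra).
    have hu := Hpos x s ltac:(apply HOm; lra) ltac:(lra).
    have e1 : lam * (cq q * Rpower (s + sgt) (- aq q)) <= lam * (cq q * Rpower sgt (- aq q)).
    { apply Rmult_le_compat_l; [lra|]. apply Rmult_le_compat_l; lra. }
    rewrite /zsub hS hr2. unfold sgt in *. lra.
  - intros x s hx hs Hlt HT HL.
    have hOm : Omega x by apply HOm; lra.
    have Hp := Hpde x s hOm ltac:(lra).
    change (laplacian_of D2u x s) with (lap (fun i => D2u i i) x s) in Hp.
    rewrite lap_Lzsub in HL. rewrite /Tzsub in HT.
    have hu := Hpos x s hOm ltac:(lra).
    have hss : 0 < s + sgt by lra.
    pose P s := aq q * cq q * Rpower (s + sgt) (- aq q - 1).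
    have HPs : Rpower (cq q * Rpower (s + sgt) (- aq q)) q = P s by apply psi_pow.
    have HPt : P t <= P s.
    { unfold P. have := Rpower_neg_anti (s + sgt) (t + sgt) (aq q + 1) ltac:(lra) ltac:(lra).
      replace (- (aq q + 1)) with (- aq q - 1) by ring. intros h. have : 0 < aq q * cq q by nra. nra. }
    have hz0 : 0 < zsub q N x0 lam sgt K x s by lra.
    have hzle : zsub q N x0 lam sgt K x s <= lam * (cq q * Rpower (s + sgt) (- aq q)).
    { rewrite /zsub. have := sqdist_nonneg _ x x0. nra. }
    have hzq := Rpower_le_base _ _ q ltac:(lra) (conj hz0 hzle).
    rewrite Rpower_mult_pos in hzq; [|lra| have := Rpower_pos (s + sgt) (- aq q); nra].
    rewrite HPs in hzq.
    have EL : Rpower lam q = lam * L.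
    { unfold L. replace q with (1 + (q - 1)) at 1 by ring. rewrite Rpower_plus Rpower_1 //; lra. }
    rewrite EL in hzq.
    have Hlt2 := Rpower_lt_base _ _ q ltac:(lra) (conj hu Hlt).
    have hKd : K * (2 * Nn N + 1) = lam * (1 - L) * P t.
    { unfold K, P, sgt. field. lra. }
    have hPt0 : 0 < P t.
    { unfold P. have h := Rpower_pos (t + sgt) (- aq q - 1).
      apply Rmult_lt_0_compat; [apply Rmult_lt_0_compat; lra| exact h]. }
    have hKN : 2 * K * Nn N <= lam * (1 - L) * P t.
    { have : 2 * K * Nn N <= K * (2 * Nn N + 1).
      { replace (K * (2 * Nn N + 1)) with (2 * K * Nn N + K) by ring. lra. }
      lra. }
    have hlL : 0 < lam * (1 - L) by (apply Rmult_lt_0_compat; lra).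
    have h5 := Rmult_le_compat_l _ _ _ (Rlt_le _ _ hlL) HPt.
    (* -u^q = Tu - lap Lu <= Tz - lap Lz *)
    have h6 : - Rpower (u x s) q <= lam * (- P s * 1) - Nn N * (- K * 2).
    { unfold P. lra. }
    have h7 : lam * (1 - L) * P s = lam * P s - lam * L * P s by ring.
    lra.
Qed.

Lemma ball_compact N (x0 : point N) r : is_compact (fun y => dist x0 y <= r).
Proof.
  split.
  - intros y Hy. apply Rnot_lt_le => h. destruct (Hy (dist x0 y - r)) as [z [hz hd]]; [lra|].
    have := dist_triang _ x0 z y. rewrite (dist_sym _ z y). lra.
  - exists x0, r. auto.
Qed.

Lemma seq_choice2 N (P : nat -> point N -> point N -> Prop) : (forall n, exists x y, P n x y) ->
  exists xs ys, forall n, P n (xs n) (ys n).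
Proof.
  intros H. have H' : forall n, exists p : point N * point N, P n (fst p) (snd p).
  { intros n; destruct (H n) as [x [y h]]; exists (x, y); exact h. }
  exists (fun n => fst (proj1_sig (constructive_indefinite_description _ (H' n)))).
  exists (fun n => snd (proj1_sig (constructive_indefinite_description _ (H' n)))).
  intros n; exact (proj2_sig (constructive_indefinite_description _ (H' n))).
Qed.

Lemma lebesgue N (Omega G : point N -> Prop) : is_open Omega -> is_bounded G ->
  (forall x, closure G x -> Omega x) ->
  exists Rb, 0 < Rb /\ forall x0, G x0 -> forall y, dist x0 y <= Rb -> Omega y.
Proof.
  intros Hop [c [M HM]] Hcl. apply NNPP => Hno.
  have H : forall n : nat, exists x y, G x /\ dist x y <= / (INR n + 1) /\ ~ Omega y.
  { intros n. apply NNPP => h. apply Hno. exists (/ (INR n + 1)). split.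
    { apply Rinv_0_lt_compat; have := pos_INR n; lra. }
    intros x0 Hx0 y Hy. apply NNPP => hy. apply h. exists x0, y. auto. }
  destruct (seq_choice2 N _ H) as [xs [ys Hxy]].
  destruct (seq_compact N c M 0 0 xs (fun _ => 0)) as [phi [x [s [Hphi [Hx _]]]]].
  { intros n; apply HM, Hxy. }
  { intros n; lra. }
  have Hclx : closure G x.
  { intros e He. destruct (Hx e He) as [n0 Hn0]. exists (xs (phi n0)). split; [apply Hxy|].
    rewrite dist_sym; apply Hn0; lia. }
  destruct (Hop x (Hcl x Hclx)) as [r0 [Hr0 Hball]].
  destruct (Hx (r0 / 2)) as [n0 Hn0]; [lra|].
  destruct (small_inv (r0 / 2)) as [n1 Hn1]; [lra|].
  pose n := max n0 n1.
  have h1 := Hn0 n (Nat.le_max_l _ _).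
  have h2 : / (INR (phi n) + 1) < r0 / 2.
  { apply Hn1. have := strict_ge phi Hphi n. have := Nat.le_max_r n0 n1. lia. }
  destruct (Hxy (phi n)) as [_ [h3 h4]].
  apply h4, Hball. have h5 := dist_triang _ x (xs (phi n)) (ys (phi n)).
  have h6 : dist x (xs (phi n)) = dist (xs (phi n)) x by apply dist_sym.
  lra.
Qed.

Lemma cont_small (f : R -> R) e : continuity_pt f 0 -> 0 < e ->
  exists eta, 0 < eta <= / 2 /\ Rabs (f eta - f 0) < e.
Proof.
  intros Hf He. destruct (cont_eps f 0 Hf e He) as [d [Hd H]].
  exists (Rmin (d / 2) (/ 2)). split.
  - split; [apply Rmin_pos; lra| apply Rmin_r].
  - apply H. rewrite Rminus_0_r Rabs_pos_eq; [|apply Rlt_le, Rmin_pos; lra].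
    have := Rmin_l (d/2) (/2). lra.
Qed.

Theorem lemma3p2 (N : nat) (q : R) (Omega : point N -> Prop) (u : point N -> R -> R) :
  1 < q -> is_domain Omega -> large_initial_solution q Omega u ->
  forall G : point N -> Prop, is_open G -> is_bounded G ->
    (forall x, closure G x -> Omega x) ->
    forall eps, eps > 0 -> exists delta, delta > 0 /\
      forall x t, G x -> 0 < t < delta ->
        Rabs (Rpower t (1 / (q - 1)) * u x t - c_q q) < eps.
Proof.
  intros Hq [_ [Hop _]] [[Hpos [Du [D2u [Dtu [HC Hpde]]]]] Hlarge] G _ HGb HGcl eps Heps.
  change (c_q q) with (cq q). change (1 / (q - 1)) with (aq q).
  have ha := aq_pos q Hq. have hc := cq_pos q.
  destruct (lebesgue N Omega G Hop HGb HGcl) as [Rb [HRb HLeb]].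
  have Hlarge' : forall (x0 : point N) r M, (forall y, dist x0 y <= r -> Omega y) ->
     exists delta, delta > 0 /\ forall x s, dist x0 x <= r -> 0 < s < delta -> M < u x s.
  { intros x0 r M Hb. destruct (Hlarge (fun y => dist x0 y <= r) (ball_compact N x0 r) Hb M) as [d [Hd H]].
    exists d; split; auto. }
  pose f1 := fun th => Rpower (1 - th) (- aq q).
  have Hf1 : continuity_pt f1 0.
  { eapply deriv_cont. apply (deriv_Rpower_comp (fun th => 1 - th)).
    - apply derivable_pt_lim_minus; [apply derivable_pt_lim_const| apply derivable_pt_lim_id].
    - lra. }
  destruct (cont_small f1 (eps / (2 * cq q)) Hf1) as [th [Hth Hth']].
  { apply Rdiv_lt_0_compat; lra. }
  have f10 : f1 0 = 1 by (unfold f1; rewrite Rminus_0_r Rpower_one_base //).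
  rewrite f10 in Hth'.
  have hth1 : cq q * f1 th < cq q + eps / 2.
  { have h : f1 th < 1 + eps / (2 * cq q) by (unfold Rabs in Hth'; destruct Rcase_abs in Hth'; lra).
    have := Rmult_lt_compat_l (cq q) _ _ hc h. replace (cq q * (1 + eps / (2 * cq q))) with (cq q + eps / 2) by (field; lra). lra. }
  pose f2 := fun et => (1 - et) * Rpower (1 + et) (- aq q).
  have Hf2 : continuity_pt f2 0.
  { eapply deriv_cont. apply derivable_pt_lim_mult.
    - apply derivable_pt_lim_minus; [apply derivable_pt_lim_const| apply derivable_pt_lim_id].
    - apply (deriv_Rpower_comp (fun et => 1 + et)).
      + apply derivable_pt_lim_plus; [apply derivable_pt_lim_const| apply derivable_pt_lim_id].
      + lra. }
  destruct (cont_small f2 (eps / (2 * cq q)) Hf2) as [et [Het Het']].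
  { apply Rdiv_lt_0_compat; lra. }
  have f20 : f2 0 = 1 by (unfold f2; rewrite Rplus_0_r Rpower_one_base; ring).
  rewrite f20 in Het'.
  have het1 : cq q - eps / 2 < cq q * f2 et.
  { have h : 1 - eps / (2 * cq q) < f2 et by (unfold Rabs in Het'; destruct Rcase_abs in Het'; lra).
    have := Rmult_lt_compat_l (cq q) _ _ hc h. replace (cq q * (1 - eps / (2 * cq q))) with (cq q - eps / 2) by (field; lra). lra. }
  destruct (lower_bound q N Omega u Du D2u Dtu Rb (1 - et) et Hq Hpos HC Hpde Hlarge' HRb ltac:(lra) ltac:(lra))
    as [d1 [Hd1 Hlow]].
  pose be := 2 * aq q.
  pose Qc := be * (Rb * Rb) * (2 * Nn N + 4 * be + 4).
  pose lamV := Rpower Qc (aq q).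
  pose D := lamV * Rpower (Rb * Rb) (- be).
  have hD : 0 < D by (unfold D; apply Rmult_lt_0_compat; apply Rpower_pos).
  pose d2 := Rpower (eps / (2 * (D + 1))) (/ aq q).
  have hd2 : 0 < d2 by apply Rpower_pos.
  exists (Rmin d1 d2). split; [apply Rmin_pos; lra|].
  intros x t Hx Ht.
  have ht0 : 0 < t by lra.
  have htd1 : t < d1 by (have := Rmin_l d1 d2; lra).
  have htd2 : t < d2 by (have := Rmin_r d1 d2; lra).
  have Hball := HLeb x Hx.
  have Hup := upper_bound q N Omega u Du D2u Dtu x Rb t th Hq Hpos HC Hpde HRb Hball ht0 ltac:(lra).
  simpl in Hup. fold be Qc lamV in Hup.
  have EV : Vsup N x lamV (Rb * Rb) be x = D by (rewrite /Vsup sqdist_refl Rminus_0_r; reflexivity).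
  rewrite EV in Hup.
  have Hlo := Hlow x t Hball (conj ht0 htd1).
  pose ta := Rpower t (aq q).
  have hta : 0 < ta by apply Rpower_pos.
  have E1 : ta * Rpower ((1 - th) * t) (- aq q) = f1 th.
  { unfold ta, f1. rewrite Rpower_mult_pos; [|lra|lra].
    have : Rpower t (aq q) * Rpower t (- aq q) = 1 by (rewrite -Rpower_plus Rplus_opp_r Rpower_O //).
    intros h. transitivity (Rpower (1 - th) (- aq q) * (Rpower t (aq q) * Rpower t (- aq q))); [ring| rewrite h; ring]. }
  have E2 : ta * ((1 - et) * (cq q * Rpower (t + et * t) (- aq q))) = cq q * f2 et.
  { unfold ta, f2. replace (t + et * t) with ((1 + et) * t) by ring. rewrite Rpower_mult_pos; [|lra|lra].
    have : Rpower t (aq q) * Rpower t (- aq q) = 1 by (rewrite -Rpower_plus Rplus_opp_r Rpower_O //).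
    intros h. transitivity ((1 - et) * cq q * Rpower (1 + et) (- aq q) * (Rpower t (aq q) * Rpower t (- aq q))); [ring| rewrite h; ring]. }
  have Hta : ta * D < eps / 2.
  { have h : ta < Rpower d2 (aq q) by (apply Rpower_lt_base; lra).
    unfold d2 in h. rewrite Rpower_mult Rinv_l in h; [|lra]. rewrite Rpower_1 in h; [|apply Rdiv_lt_0_compat; lra].
    have h2 : ta * D < eps / (2 * (D + 1)) * D by (apply Rmult_lt_compat_r; lra).
    have h3 : eps / (2 * (D + 1)) * D < eps / 2.
    { replace (eps / (2 * (D + 1)) * D) with (eps / 2 * (D / (D + 1))) by (field; lra).
      have : D / (D + 1) < 1 by (apply (Rmult_lt_reg_r (D + 1)); [lra|]; unfold Rdiv; rewrite Rmult_assoc Rinv_l; lra).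
      intros h4. have := Rmult_lt_compat_l (eps / 2) _ _ ltac:(lra) h4. lra. }
    lra. }
  have Hup2 : ta * u x t <= cq q * f1 th + ta * D.
  { have := Rmult_le_compat_l ta _ _ (Rlt_le _ _ hta) Hup. rewrite Rmult_plus_distr_l -Rmult_assoc (Rmult_comm ta (cq q)) Rmult_assoc E1. lra. }
  have Hlo2 : cq q * f2 et <= ta * u x t.
  { have := Rmult_le_compat_l ta _ _ (Rlt_le _ _ hta) Hlo. rewrite E2. lra. }
  fold ta. unfold Rabs; destruct Rcase_abs; lra.
Qed.
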